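(* For every $n\ge9$ we have $\tilde b(TC_n)\le 2^{n/4}(2^{-1/2}+2^{-1/4})$.
   Context: The triangular cycle $TC_n$ is the graph with vertex set $[n]$ in which $i\ne j$ are adjacent iff $i-j\pmod n\in\{n-2,n-1,1,2\}$. $\mathrm{Ind}(G)$ is the independence complex of $G$ (including the empty face), and $\tilde b(G)=\sum_{i\ge-1}\dim_{\mathbb{K}}\widetilde H_i(\mathrm{Ind}(G);\mathbb{K})$ for a fixed field $\mathbb{K}$. *)

(* Defs.v *)
From mathcomp Require Import all_boot all_order all_algebra.
Set Implicit Arguments. Unset Strict Implicit. Unset Printing Implicit Defensive.
Import GRing.Theory.
Local Open Scope ring_scope.

Definition tc_adj (n : nat) (i j : 'I_n) : bool :=
  (i != j) && (((i + n - j) %% n)%N \in [:: (n - 2)%N; (n - 1)%N; 1%N; 2%N]).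

(* independent sets of TC_n (faces of Ind(TC_n), including the empty face) *)
Definition tc_indep (n : nat) (S : {set 'I_n}) : bool :=
  [forall i in S, forall j in S, ~~ tc_adj i j].

(* faces with s vertices (dimension s-1) *)
Definition faces (n s : nat) : {set {set 'I_n}} :=
  [set S | tc_indep S & #|S| == s].

(* Simplicial boundary map C_{s} (faces with s+1 vertices) -> C_{s-1} (faces with s vertices),
   as a matrix acting on row vectors, basis = enumeration of faces, vertices ordered by <. *)
Definition bd (K : fieldType) (n s : nat) : 'M[K]_(#|faces n s.+1|, #|faces n s|) :=
  \matrix_(i < #|faces n s.+1|, j < #|faces n s|)
    (let sigma : {set 'I_n} := enum_val i in let tau : {set 'I_n} := enum_val j in
     if tau \subset sigma then
       \sum_(v in sigma :\: tau) (-1) ^+ #|[set u in sigma | (u < v)%N]|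
     else 0).

(* kernel of the boundary map going out of C_{s-1}; for s = 0 (the empty face,
   reduced chain group in degree -1) the outgoing map is 0, so the kernel is everything. *)
Definition kerC (K : fieldType) (n s : nat) : 'M[K]_(#|faces n s|) :=
  match s return 'M[K]_(#|faces n s|) with
  | 0 => 1%:M
  | s'.+1 => kermx (bd K n s')
  end.

(* dim_K of reduced homology \tilde H_{s-1}(Ind(TC_n); K) = dim (ker / (im cap ker)) *)
Definition redhom_dim (K : fieldType) (n s : nat) : nat :=
  (\rank (kerC K n s) - \rank (bd K n s :&: kerC K n s)%MS)%N.

(* \tilde b(TC_n) = sum over i >= -1 of dim \tilde H_i; faces have at most n vertices *)
Definition btilde (K : fieldType) (n : nat) : nat :=
  (\sum_(s < n.+2) redhom_dim K n s)%N.

(* Main.v *)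
Require Import Defs.
From mathcomp Require Import all_boot all_order all_algebra.
From mathcomp Require Import zify ring.
From Stdlib Require Import FunctionalExtensionality.
Set Implicit Arguments. Unset Strict Implicit. Unset Printing Implicit Defensive.
Import GRing.Theory.

Module MA.
Local Open Scope ring_scope.

Section Gen.
Variable (K : fieldType) (n : nat).
Implicit Types (P : {set 'I_n} -> bool).

Definition facesP P (s : nat) : {set {set 'I_n}} := [set S | P S & #|S| == s].

Definition Ent (sigma tau : {set 'I_n}) : K :=
  if tau \subset sigma then
       \sum_(v in sigma :\: tau) (-1) ^+ #|[set u in sigma | (u < v)%N]|
  else 0.

Definition bdP P (s : nat) : 'M[K]_(#|facesP P s.+1|, #|facesP P s|) :=
  \matrix_(i < #|facesP P s.+1|, j < #|facesP P s|)
    (let sigma : {set 'I_n} := enum_val i in let tau : {set 'I_n} := enum_val j in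
     if tau \subset sigma then
       \sum_(v in sigma :\: tau) (-1) ^+ #|[set u in sigma | (u < v)%N]|
     else 0).

Definition kerCP P (s : nat) : 'M[K]_(#|facesP P s|) :=
  match s return 'M[K]_(#|facesP P s|) with
  | 0 => 1%:M
  | s'.+1 => kermx (bdP P s')
  end.

Definition redhomP P (s : nat) : nat :=
  (\rank (kerCP P s) - \rank (bdP P s :&: kerCP P s)%MS)%N.

Definition btildeP P : nat := (\sum_(s < n.+2) redhomP P s)%N.

Lemma bdPE P s i j : bdP P s i j = Ent (enum_val i) (enum_val j).
Proof. by rewrite mxE. Qed.

End Gen.

Lemma btilde_P K n : btilde K n = btildeP K (@tc_indep n).
Proof. reflexivity. Qed.

End MA.
Import MA.

Module MB.
Local Open Scope ring_scope.

Section Sq.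
Variable (K : fieldType) (n : nat).

Lemma card_lt_rem (sg : {set 'I_n}) (x y : 'I_n) :
  #|[set u in sg | (u < y)%N]| = ((x \in sg) && (x < y)%N + #|[set u in sg :\ x | (u < y)%N]|)%N.
Proof.
rewrite (cardsD1 x) !inE; congr (_ + _)%N; apply: eq_card => u; rewrite !inE.
by case: (u == x); rewrite ?andbF ?andbT.
Qed.

Lemma Ent_rem (sg : {set 'I_n}) x : x \in sg ->
  Ent K sg (sg :\ x) = (-1) ^+ #|[set u in sg | (u < x)%N]|.
Proof.
move=> xs; rewrite /Ent subD1set.
have -> : sg :\: (sg :\ x) = [set x].
  apply/setP => u; rewrite !inE; case: (u =P x) => [->|]; first by rewrite xs.
  by move=> _ /=; case: (u \in sg).
by rewrite big_set1.
Qed.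

Lemma Ent_sq (sg rho : {set 'I_n}) (F : {set {set 'I_n}}) (s : nat) :
  #|sg| = s.+2 -> #|rho| = s ->
  (forall tau : {set 'I_n}, tau \subset sg -> #|tau| = s.+1 -> tau \in F) ->
  (forall tau : {set 'I_n}, tau \in F -> #|tau| = s.+1) ->
  \sum_(tau in F) Ent K sg tau * Ent K tau rho = 0.
Proof.
move=> csg crho HF HF2.
have Z : forall tau : {set 'I_n}, tau \in F -> ~~ ((tau \subset sg) && (rho \subset tau)) ->
    Ent K sg tau * Ent K tau rho = 0.
  move=> tau _; rewrite /Ent; case: (tau \subset sg); case: (rho \subset tau) => //= _.
  by rewrite mulr0. by rewrite mul0r. by rewrite mul0r.
rewrite (bigID (fun tau : {set 'I_n} => (tau \subset sg) && (rho \subset tau))) /=.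
rewrite [X in _ + X]big1 ?addr0; last first.
  move=> tau /andP[tF nt]. exact: Z.
case: (boolP (rho \subset sg)) => rs; last first.
  rewrite big1 // => tau /andP[_ /andP[ts rt]].
  by case/negP: rs; exact: subset_trans rt ts.
have cD : #|sg :\: rho| = 2%N.
  have := cardsD sg rho; rewrite (setIidPr rs) crho csg => ->; lia.
have /cards2P [x [y [xy D]]] : #|sg :\: rho| == 2%N by apply/eqP.
wlog xly : x y xy D / (x < y)%N.
  move=> W; case: (ltngtP x y) => h; first exact: W h.
  - apply: (W y x); rewrite 1?eq_sym // D; exact: setUC.
  - by move/val_inj: h xy => ->; rewrite eqxx.
have xs : x \in sg by have := set21 x y; rewrite -D inE => /andP[].
have ys : y \in sg by have := set22 x y; rewrite -D inE => /andP[].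
have xr : x \notin rho by have := set21 x y; rewrite -D inE => /andP[].
have yr : y \notin rho by have := set22 x y; rewrite -D inE => /andP[].
have cs : forall z, z \in sg -> #|sg :\ z| = s.+1.
  by move=> z zs; have := cardsD1 z sg; rewrite zs csg => /eqP; rewrite eqSS => /eqP.
have E : [set tau in F | (tau \subset sg) && (rho \subset tau)] = [set sg :\ x; sg :\ y].
  apply/setP => tau; rewrite !inE; apply/idP/idP.
  - case/andP=> tF /andP[ts rt].
    have ct : #|tau| = s.+1 by exact: HF2.
    have /cards1P [z Dz] : #|sg :\: tau| == 1%N.
      by have := cardsD sg tau; rewrite (setIidPr ts) ct csg => ->; apply/eqP; lia.
    have zs : z \in sg by have := set11 z; rewrite -Dz inE => /andP[].
    have zt : z \notin tau by have := set11 z; rewrite -Dz inE => /andP[].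
    have zr : z \notin rho by apply: contra zt; move/(subsetP rt).
    have Dt : tau = sg :\ z.
      apply/setP => u; rewrite !inE; case: (boolP (u \in tau)) => ut.
      + rewrite (subsetP ts u ut) andbT; case: (u =P z) => // uz; by rewrite -uz ut in zt.
      + case: (boolP (u \in sg)) => us; rewrite ?andbF // andbT.
        have : u \in sg :\: tau by rewrite inE ut us.
        by rewrite Dz inE => ->.
    have : z \in sg :\: rho by rewrite inE zr zs.
    rewrite D !inE Dt => /orP[] /eqP ->; by rewrite eqxx ?orbT.
  - have H1 : forall z, z \in sg -> z \notin rho -> (sg :\ z) \in F /\ (sg :\ z \subset sg) /\ (rho \subset sg :\ z).
      move=> z zs zr; split; first by apply: HF; [exact: subD1set | exact: cs].
      split; first exact: subD1set.
      apply/subsetP => u ur; rewrite !inE (subsetP rs u ur) andbT.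
      by apply/eqP => uz; rewrite -uz ur in zr.
    move=> /orP[] /eqP ->.
    + by case: (H1 x xs xr) => -> [-> ->].
    + by case: (H1 y ys yr) => -> [-> ->].
transitivity (\sum_(tau in [set tau in F | (tau \subset sg) && (rho \subset tau)]) Ent K sg tau * Ent K tau rho).
  by apply: eq_bigl => t; rewrite inE.
have xny : sg :\ x != sg :\ y.
  apply/eqP => /setP /(_ x); rewrite !inE eqxx /= xs andbT.
  by rewrite xy.
rewrite E big_setU1 ?inE //= big_set1.
have Rxy : rho = (sg :\ x) :\ y.
  apply/setP => u; rewrite !inE; case: (boolP (u \in rho)) => ur.
  + rewrite (subsetP rs u ur) !andbT; apply/esym/andP; split; apply/eqP => h; subst u.
      by rewrite ur in yr. by rewrite ur in xr.
  + case: (boolP (u \in sg)) => us; rewrite ?andbF //= andbT.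
    have : u \in sg :\: rho by rewrite inE ur us.
    rewrite D !inE; case/orP => /eqP ->; by rewrite eqxx ?andbF.
have Ryx : rho = (sg :\ y) :\ x.
  by rewrite Rxy !setDDl setUC.
have ysx : y \in sg :\ x by rewrite !inE ys andbT eq_sym.
have xsy : x \in sg :\ y by rewrite !inE xs andbT.
rewrite {1}Rxy Ryx !Ent_rem //.
rewrite (card_lt_rem sg x y) xs xly /= (card_lt_rem sg y x) ys /=.
have -> : (y < x)%N = false by apply/negbTE; rewrite -leqNgt ltnW.
rewrite add0n add1n exprS.
ring.
Qed.
End Sq.

End MB.
Import MB.

Module MC.
Local Open Scope ring_scope.

Section Betti.
Variable (K : fieldType) (n : nat).
Implicit Types (P : {set 'I_n} -> bool).

Definition dclosed P := forall S T : {set 'I_n}, T \subset S -> P S -> P T.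

Lemma in_facesP P s (S : {set 'I_n}) : (S \in facesP P s) = P S && (#|S| == s).
Proof. by rewrite inE. Qed.

Lemma bd_sq P s : dclosed P -> bdP K P s.+1 *m bdP K P s = 0.
Proof.
move=> HP; apply/matrixP => i k; rewrite mxE [RHS]mxE.
under eq_bigr do rewrite !bdPE.
rewrite -(big_enum_val (fun tau => Ent K (enum_val i) tau * Ent K tau (enum_val k))).
have := enum_valP i; rewrite in_facesP => /andP[Pi /eqP ci].
have := enum_valP k; rewrite in_facesP => /andP[Pk /eqP ck].
apply: (@Ent_sq K n (enum_val i) (enum_val k) (facesP P s.+1) s) => //.
- move=> tau ts ct; rewrite in_facesP ct eqxx andbT; exact: HP ts Pi.
- by move=> tau; rewrite in_facesP => /andP[_ /eqP].
Qed.

Lemma redhom_eq P s : dclosed P ->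
  (redhomP K P s + \rank (bdP K P s) + (if s is s'.+1 then \rank (bdP K P s') else 0))%N
   = #|facesP P s|.
Proof.
move=> HP; rewrite /redhomP; case: s => [|s] /=.
  have f1 : row_full (1%:M : 'M[K]_(#|facesP P 0|)) by rewrite row_full_unit unitmx1.
  rewrite (capmxT _ f1) mxrank1 addn0 subnK //; exact: rank_leq_col.
have sub : (bdP K P s.+1 <= kermx (bdP K P s))%MS by rewrite sub_kermx bd_sq // eqxx.
rewrite (capmx_idPl sub) mxrank_ker.
have := mxrankS sub; rewrite mxrank_ker.
  have := rank_leq_row (bdP K P s); move=> h1 h2; rewrite subnK // subnK //.
Qed.


Lemma faces_big P m : (n < m)%N -> #|facesP P m| = 0%N.
Proof.
move=> nm; apply/eqP; rewrite cards_eq0; apply/eqP/setP => S; rewrite inE in_set0.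
have := max_card (mem S); rewrite card_ord => h.
apply/negbTE; rewrite negb_and; apply/orP; right; apply/eqP => e.
by move: h; rewrite -/(#|S|) e leqNgt nm.
Qed.

Definition NP P := (\sum_(s < n.+2) #|facesP P s|)%N.
Definition RP P := (\sum_(s < n.+1) \rank (bdP K P s))%N.

Lemma btilde_eq P : dclosed P -> (btildeP K P + 2 * RP P)%N = NP P.
Proof.
move=> HP; rewrite /NP /btildeP.
under [RHS]eq_bigr => s _ do rewrite -(redhom_eq s HP).
rewrite !big_split /=.
rewrite [X in (_ + _ + X)%N]big_ord_recl /= add0n.
rewrite [X in (_ + X + _)%N]big_ord_recr /=.
have -> : \rank (bdP K P n.+1) = 0%N.
  apply/eqP; rewrite -leqn0; apply: leq_trans (rank_leq_row _) _.
  by rewrite faces_big.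
rewrite addn0 /RP.
by rewrite mul2n -addnn addnA.
Qed.

End Betti.

End MC.
Import MC.

Module MD.
Local Open Scope ring_scope.

Section Mx.
Variable K : fieldType.

Lemma rank_mxsub m1 m2 k1 k2 (M : 'M[K]_(m1, m2)) (f : 'I_k1 -> 'I_m1) (g : 'I_k2 -> 'I_m2) :
  (\rank (mxsub f g M) <= \rank M)%N.
Proof.
have -> : mxsub f g M = rowsub f 1%:M *m (M *m colsub g 1%:M).
  by rewrite mulmxA -rowsubE -mxsub_mul mulmx1.
apply: leq_trans (mxrankM_maxr _ _) _; exact: mxrankM_maxl.
Qed.

Lemma rank_block_tri m1 m2 n1 n2 (A : 'M[K]_(m1, n1)) (X : 'M[K]_(m2, n1)) (B : 'M[K]_(m2, n2)) :
  (\rank A + \rank B <= \rank (block_mx A 0 X B))%N.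
Proof.
set M := block_mx A 0 X B.
pose Pr : 'M[K]_(n1 + n2, n2) := col_mx 0 1%:M.
rewrite -(mxrank_mul_ker M Pr).
have -> : M *m Pr = col_mx 0 B.
  by rewrite /M block_mxEv mul_col_mx !mul_row_col !mulmx0 mul0mx mulmx1 !add0r.
rewrite rank_col_0mx addnC leq_add2l.
have -> : \rank A = \rank (row_mx A (0 : 'M[K]_(m1, n2))) by rewrite rank_row_mx0.
apply: mxrankS; rewrite sub_capmx; apply/andP; split.
  have := submx_refl M; rewrite /M block_mxEv col_mx_sub => /andP[] //.
by rewrite sub_kermx mul_row_col mulmx0 mul0mx addr0.
Qed.

Lemma rank_diag_scale m1 m2 (A : 'M[K]_(m1, m2)) (r : 'I_m1 -> K) (c : 'I_m2 -> K) :
  (\rank (\matrix_(i < m1, j < m2) (r i * A i j * c j)%R) <= \rank A)%N.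
Proof.
have -> : \matrix_(i < m1, j < m2) (r i * A i j * c j)%R =
          diag_mx (\row_i r i) *m A *m diag_mx (\row_j c j).
  by apply/matrixP => i j; rewrite mul_mx_diag mul_diag_mx !mxE.
apply: leq_trans (mxrankM_maxl _ _) _; exact: mxrankM_maxr.
Qed.

Lemma rank_diag_pm1 m (A : 'M[K]_m) : (forall i j, i != j -> A i j = 0) ->
  (forall i, A i i * A i i = 1) -> \rank A = m.
Proof.
move=> H0 H1; apply: mxrank_unit.
have : A *m A = 1%:M.
  apply/matrixP => i j; rewrite !mxE (bigD1 i) //= big1 ?addr0.
    case: (eqVneq i j) => [<-|ij]; first by rewrite H1.
    by rewrite (H0 _ _ ij) mulr0.
  by move=> k ki; rewrite (H0 i k) ?mul0r // eq_sym.
by move=> AA; case: (mulmx1_unit AA).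
Qed.

End Mx.

Lemma embed (T : finType) (F G : {set T}) (h : T -> T) :
  {in G, forall x, h x \in F} ->
  {f : 'I_#|G| -> 'I_#|F| | forall i, enum_val (f i) = h (enum_val i)}.
Proof.
move=> H.
exists (fun i => enum_rank_in (H _ (enum_valP i)) (h (enum_val i))).
by move=> i; rewrite enum_rankK_in // H // enum_valP.
Qed.

End MD.
Import MD.

Module ME.
Local Open Scope ring_scope.

Section Dec.
Variable (K : fieldType) (n : nat).
Variable (P : {set 'I_n} -> bool) (v : 'I_n).
Hypothesis HP : dclosed P.

Definition Pdel (S : {set 'I_n}) := P S && (v \notin S).
Definition Plk (S : {set 'I_n}) := P (v |: S) && (v \notin S).

Lemma dcl_del : dclosed Pdel.
Proof.
move=> S T TS /andP[PS vS]; rewrite /Pdel (HP TS PS) /=.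
by apply: contra vS; move/(subsetP TS).
Qed.

Lemma dcl_lk : dclosed Plk.
Proof.
move=> S T TS /andP[PS vS]; rewrite /Plk.
rewrite (HP _ PS) /=; last by apply: setUS.
by apply: contra vS; move/(subsetP TS).
Qed.

Definition sgv (S : {set 'I_n}) : K := (-1) ^+ #|[set u in S | (u < v)%N]|.

Lemma sgv2 S : sgv S * sgv S = 1.
Proof. by rewrite /sgv -expr2 sqrr_sign. Qed.

Lemma Ent_lk (sg tau : {set 'I_n}) : v \notin sg -> v \notin tau -> #|sg| = #|tau|.+1 ->
  Ent K sg tau = sgv sg * Ent K (v |: sg) (v |: tau) * (- sgv tau).
Proof.
move=> vs vt cst; rewrite /Ent.
case: (boolP (tau \subset sg)) => ts; last first.
  have -> : (v |: tau \subset v |: sg) = false.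
    apply/negbTE; apply: contra ts => h; apply/subsetP => u ut.
    have : u \in v |: sg by apply: (subsetP h); rewrite !inE ut orbT.
    case/setU1P => [e|//]; by rewrite -e ut in vt.
  by rewrite mulr0 mul0r.
rewrite setUS //.
have /cards1P [w Dw] : #|sg :\: tau| == 1%N.
  by have := cardsD sg tau; rewrite (setIidPr ts) cst => ->; apply/eqP; lia.
have ws : w \in sg by have := set11 w; rewrite -Dw inE => /andP[].
have wt : w \notin tau by have := set11 w; rewrite -Dw inE => /andP[].
have wv : w != v by apply/eqP => e; rewrite -e ws in vs.
have -> : (v |: sg) :\: (v |: tau) = sg :\: tau.
  apply/setP => u; rewrite !inE; case: (u =P v) => [->|] /=; first by rewrite (negbTE vs) andbF.
  by [].
rewrite Dw !big_set1.
have Tw : tau = sg :\ w.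
  apply/setP => u; rewrite !inE; case: (boolP (u \in tau)) => ut.
  + rewrite (subsetP ts u ut) andbT; case: (u =P w) => // uw; by rewrite -uw ut in wt.
  + case: (boolP (u \in sg)) => us; rewrite ?andbF // andbT.
    have : u \in sg :\: tau by rewrite inE ut us.
    by rewrite Dw inE => ->.
rewrite /sgv Tw (card_lt_rem (v |: sg) v w) (card_lt_rem sg w v) ws setU11 /=.
have -> : (v |: sg) :\ v = sg.
  apply/setP => u; rewrite !inE; case: (u =P v) => [->|] /=; by [rewrite (negbTE vs)|].
have : (v < w)%N || (w < v)%N.
  by rewrite -neq_ltn; apply: contra wv => /eqP e; apply/eqP; apply: val_inj.
case/orP => h.
- have -> : (w < v)%N = false by apply/negbTE; rewrite -leqNgt ltnW.
  rewrite h add0n add1n exprS.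
  set a := (-1) ^+ #|[set u in sg :\ w | (u < v)%N]| : K.
  have a2 : a * a = 1 by rewrite /a -expr2 sqrr_sign.
  transitivity (((-1) ^+ #|[set u in sg | (u < w)%N]|) * (a * a)); first by rewrite a2 mulr1.
  ring.
- have -> : (v < w)%N = false by apply/negbTE; rewrite -leqNgt ltnW.
  rewrite h add0n add1n exprS.
  set a := (-1) ^+ #|[set u in sg :\ w | (u < v)%N]| : K.
  have a2 : a * a = 1 by rewrite /a -expr2 sqrr_sign.
  transitivity (((-1) ^+ #|[set u in sg | (u < w)%N]|) * (a * a)); first by rewrite a2 mulr1.
  ring.
Qed.


Lemma faces_del_lk s :
  #|facesP P s.+1| = (#|facesP Pdel s.+1| + #|facesP Plk s|)%N.
Proof.
rewrite -(cardsID [set S : {set 'I_n} | v \in S] (facesP P s.+1)) addnC.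
congr (_ + _)%N.
  apply: eq_card => S; rewrite !inE /Pdel; case: (v \in S); by rewrite ?andbF ?andbT.
have -> : facesP P s.+1 :&: [set S : {set 'I_n} | v \in S] = [set v |: T | T in facesP Plk s].
  apply/setP => S; rewrite !inE; apply/idP/idP.
  - case/andP=> /andP[PS cS] vS; apply/imsetP; exists (S :\ v); last by rewrite setD1K.
    rewrite !inE /Plk setD1K // PS !inE eqxx /=.
    by have := cardsD1 v S; rewrite vS (eqP cS) add1n => -[<-].
  - case/imsetP => T; rewrite !inE => /andP[/andP[PT vT] cT] ->.
    rewrite PT setU11 andbT cardsU1 vT (eqP cT) /=; by [].
apply: card_in_imset => S T; rewrite !inE => /andP[/andP[_ vS] _] /andP[/andP[_ vT] _] e.
by rewrite -(setU1K vS) -(setU1K vT) e.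
Qed.

Lemma faces_del0 : #|facesP P 0| = #|facesP Pdel 0|.
Proof.
apply: eq_card => S; rewrite !inE /Pdel; case: (boolP (v \in S)) => vS; rewrite ?andbT //.
rewrite andbF /=; apply/negbTE; rewrite negb_and; apply/orP; right.
by rewrite -lt0n card_gt0; apply/set0Pn; exists v.
Qed.

Lemma del_sub s : {in facesP Pdel s, forall x, id x \in facesP P s}.
Proof. by move=> S; rewrite !inE /Pdel => /andP[/andP[-> _] ->]. Qed.

Lemma rank_del0 : (\rank (bdP K Pdel 0) <= \rank (bdP K P 0))%N.
Proof.
have [fA HfA] := embed (@del_sub 1%N).
have [gA HgA] := embed (@del_sub 0%N).
apply: leq_trans (rank_mxsub _ fA gA).
rewrite (_ : mxsub fA gA (bdP K P 0) = bdP K Pdel 0) //.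
by apply/matrixP => i j; rewrite !mxE -/(Ent K _ _) -/(Ent K _ _) HfA HgA.
Qed.


Lemma lk_sub s : {in facesP Plk s, forall x, v |: x \in facesP P s.+1}.
Proof.
move=> S; rewrite !inE /Plk => /andP[/andP[-> vS] /eqP cS].
by rewrite cardsU1 vS cS /=.
Qed.

Lemma rank_step s :
  (\rank (bdP K Pdel s.+1) + \rank (bdP K Plk s) <= \rank (bdP K P s.+1))%N.
Proof.
have [fA HfA] := embed (@del_sub s.+2).
have [fB HfB] := embed (@lk_sub s.+1).
have [gA HgA] := embed (@del_sub s.+1).
have [gB HgB] := embed (@lk_sub s).
pose f i := match split i with inl a => fA a | inr b => fB b end.
pose g j := match split j with inl a => gA a | inr b => gB b end.
set M := bdP K P s.+1.
apply: leq_trans (rank_mxsub M f g).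
set N := mxsub f g M.
rewrite -(submxK N).
have -> : ursubmx N = 0.
  apply/matrixP => i j; rewrite !mxE /f /g (unsplitK (inl _)) (unsplitK (inr _)).
  rewrite -/(Ent K _ _) HfA HgB /Ent.
  have := enum_valP i; rewrite !inE /Pdel => /andP[/andP[_ vS] _].
  have -> : (v |: enum_val j \subset enum_val i) = false.
    apply/negbTE; apply: contra vS => /subsetP; apply; exact: setU11.
  by [].
have -> : ulsubmx N = bdP K Pdel s.+1.
  apply/matrixP => i j; rewrite !mxE /f /g (unsplitK (inl _)) (unsplitK (inl _)).
  by rewrite -/(Ent K _ _) -/(Ent K _ _) HfA HgA.
apply: leq_trans (rank_block_tri _ _ _); rewrite leq_add2l.
set Q := drsubmx N.
have -> : bdP K Plk s = \matrix_(i, j) (sgv (enum_val i) * Q i j * (- sgv (enum_val j))).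
  apply/matrixP => i j; rewrite !mxE /f /g (unsplitK (inr _)) (unsplitK (inr _)).
  rewrite -/(Ent K _ _) -/(Ent K _ _) HfB HgB.
  have := enum_valP i; rewrite !inE /Plk => /andP[/andP[_ vi] /eqP ci].
  have := enum_valP j; rewrite !inE /Plk => /andP[/andP[_ vj] /eqP cj].
  by apply: Ent_lk; rewrite // ci cj.
exact: rank_diag_scale.
Qed.


Lemma lk_sub0 s : {in facesP Plk s, forall x, id x \in facesP P s}.
Proof.
move=> S; rewrite !inE /Plk => /andP[/andP[PS vS] cS].
by rewrite cS andbT; apply: (HP _ PS); apply: subsetUr.
Qed.

Lemma rank_cone s : (#|facesP Plk s| <= \rank (bdP K P s))%N.
Proof.
have [fB HfB] := embed (@lk_sub s).
have [gC HgC] := embed (@lk_sub0 s).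
set M := bdP K P s.
apply: leq_trans (rank_mxsub M fB gC).
rewrite rank_diag_pm1 //.
- move=> i j ij; rewrite !mxE -/(Ent K _ _) HfB HgC /Ent.
  have := enum_valP i; rewrite !inE /Plk => /andP[/andP[_ vi] /eqP ci].
  have := enum_valP j; rewrite !inE /Plk => /andP[/andP[_ vj] /eqP cj].
  case: (boolP (enum_val j \subset v |: enum_val i)) => // sub.
  have sub' : enum_val j \subset enum_val i.
    apply/subsetP => u uj; have := subsetP sub u uj; case/setU1P => // e.
    by move: uj; rewrite e => uj; rewrite uj in vj.
  have := subset_leqif_cards sub'; rewrite ci cj => -[_].
  rewrite eqxx => /esym/eqP /enum_val_inj e; by rewrite e eqxx in ij.
- move=> i; rewrite !mxE -/(Ent K _ _) HfB HgC.
  have := enum_valP i; rewrite !inE /Plk => /andP[/andP[_ vi] _].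
  set S := enum_val i in vi *.
  rewrite -/(Ent K (v |: S) S).
  have -> : Ent K (v |: S) S = Ent K (v |: S) ((v |: S) :\ v) by rewrite setU1K.
  by rewrite Ent_rem ?setU11 // -expr2 sqrr_sign.
Qed.

End Dec.

End ME.
Import ME.

Module MF.
Local Open Scope ring_scope.

Section Comb.
Variable (K : fieldType) (n : nat) (P : {set 'I_n} -> bool) (v : 'I_n).
Hypothesis HP : dclosed P.

Lemma NP_split : NP P = (NP (Pdel P v) + NP (Plk P v))%N.
Proof.
rewrite /NP [X in (X = _)%N]big_ord_recl [X in (_ = X + _)%N]big_ord_recl [X in (_ = _ + X)%N]big_ord_recr /=.
rewrite (faces_big (Plk P v) (ltnSn n)) addn0 -faces_del0.
under eq_bigr => i _ do rewrite (faces_del_lk P v i).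
by rewrite big_split /= addnA.
Qed.

Lemma RP_split : (RP K (Pdel P v) + RP K (Plk P v) <= RP K P)%N.
Proof.
rewrite /RP [X in (_ <= X)%N]big_ord_recl [X in (X + _ <= _)%N]big_ord_recl [X in (_ + X <= _)%N]big_ord_recr /=.
have -> : \rank (bdP K (Plk P v) n) = 0%N.
  apply/eqP; rewrite -leqn0; apply: leq_trans (rank_leq_row _) _.
  by rewrite faces_big.
rewrite addn0 -addnA leq_add ?rank_del0 //.
rewrite -big_split /=; apply: leq_sum => i _; exact: rank_step.
Qed.

Lemma btilde_dec : (btildeP K P <= btildeP K (Pdel P v) + btildeP K (Plk P v))%N.
Proof.
have e1 := btilde_eq K HP.
have e2 := btilde_eq K (@dcl_del _ P v HP).
have e3 := btilde_eq K (@dcl_lk _ P v HP).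
have := NP_split; have := RP_split; lia.
Qed.

Lemma btilde_cone : Plk P v = Pdel P v -> btildeP K P = 0%N.
Proof.
move=> E.
have e1 := btilde_eq K HP.
have e2 := btilde_eq K (@dcl_del _ P v HP).
have R : (NP (Plk P v) <= RP K P)%N.
  rewrite /NP /RP big_ord_recr /= faces_big // addn0.
  apply: leq_sum => i _; exact: rank_cone.
have := NP_split; rewrite E => NPs; rewrite E in R; lia.
Qed.

End Comb.

End MF.
Import MF.

Lemma btilde_empty K n (P : {set 'I_n} -> bool) : dclosed P -> P set0 ->
  (forall S, P S -> S = set0) -> btildeP K P = 1%N.
Proof.
move=> HP P0 HS.
have e := btilde_eq K HP.
have F0 : forall s, #|facesP P s.+1| = 0%N.
  move=> s; apply/eqP; rewrite cards_eq0; apply/eqP/setP => S; rewrite !inE.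
  apply/negbTE; apply/negP => /andP[/HS -> ]; by rewrite cards0.
have N1 : NP P = 1%N.
  rewrite /NP big_ord_recl big1 => [|i _]; last exact: F0.
  rewrite addn0; apply/eqP/cards1P; exists set0; apply/setP => S; rewrite !inE.
  apply/idP/idP => [/andP[/HS -> _] //|/eqP ->]; by rewrite P0 cards0.
have R0 : RP K P = 0%N.
  rewrite /RP big1 // => i _; apply/eqP; rewrite -leqn0.
  by apply: leq_trans (rank_leq_row _) _; rewrite F0.
by move: e; rewrite N1 R0 muln0 addn0.
Qed.

Section TC.
Variable n : nat.

Lemma tc_adjE (i j : 'I_n) : tc_adj i j =
  (i != j) && [|| ((i <= j + 2) && (j <= i + 2))%N, (i + n <= j + 2)%N | (j + n <= i + 2)%N].
Proof.
rewrite /tc_adj; case: (i =P j) => [->|/eqP ij] //=.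
have hi := ltn_ord i; have hj := ltn_ord j.
have ine : (i : nat) <> j by move=> e; apply: (negP ij); apply/eqP/val_inj.
have -> : ((i + n - j) %% n)%N = if (j <= i)%N then (i - j)%N else (i + n - j)%N.
  case: leqP => h.
    rewrite -addnBAC // modnDr modn_small //; lia.
  rewrite modn_small //; lia.
rewrite !inE; case: leqP => h; apply/idP/idP; rewrite ?orbF.
all: try (move=> H; repeat (case/orP: H => H); lia).
all: move=> H; repeat (case/orP: H => H); apply/orP; lia.
Qed.


Lemma tc_adj_sym (i j : 'I_n) : tc_adj i j = tc_adj j i.
Proof.
rewrite !tc_adjE eq_sym; congr (_ && _).
apply/idP/idP => H; repeat (case/orP: H => H); apply/orP; lia.
Qed.

Lemma tc_adj_irr (i : 'I_n) : tc_adj i i = false.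
Proof. by rewrite /tc_adj eqxx. Qed.

Definition PW (W S : {set 'I_n}) := tc_indep S && (S \subset W).

Lemma indepP (S : {set 'I_n}) :
  reflect (forall i j, i \in S -> j \in S -> ~~ tc_adj i j) (tc_indep S).
Proof.
apply: (iffP forall_inP) => [H i j iS jS|H i iS].
  by have := H i iS => /forall_inP; apply.
by apply/forall_inP => j jS; apply: H.
Qed.

Lemma dcl_PW W : dclosed (PW W).
Proof.
move=> S T TS /andP[/indepP IS SW]; rewrite /PW (subset_trans TS SW) andbT.
apply/indepP => i j iT jT; apply: IS; exact: (subsetP TS).
Qed.

Lemma del_PW (W : {set 'I_n}) (v : 'I_n) : Pdel (PW W) v = PW (W :\ v).
Proof.
apply: functional_extensionality => S; rewrite /Pdel /PW.
case: (tc_indep S) => //=; apply/idP/idP.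
- case/andP=> SW vS; apply/subsetP => u uS; rewrite !inE (subsetP SW u uS) andbT.
  by apply/eqP => e; rewrite -e uS in vS.
- move=> SW; apply/andP; split; first exact: subset_trans SW (subD1set _ _).
  apply/negP => vS; have := subsetP SW v vS; by rewrite !inE eqxx.
Qed.

Definition NB (v : 'I_n) : {set 'I_n} := [set u | (u == v) || tc_adj v u].

Lemma lk_PW (W : {set 'I_n}) (v : 'I_n) : v \in W -> Plk (PW W) v = PW (W :\: NB v).
Proof.
move=> vW; apply: functional_extensionality => S; rewrite /Plk /PW.
apply/idP/idP.
- case/andP=> /andP[/indepP I SW] vS; apply/andP; split.
    apply/indepP => i j iS jS; apply: I; by rewrite inE ?iS ?jS orbT.
  apply/subsetP => u uS; rewrite !inE (subsetP SW u) ?inE ?uS ?orbT // andbT.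
  rewrite negb_or; apply/andP; split.
    by apply/eqP => e; rewrite -e uS in vS.
  by apply: I; rewrite !inE ?eqxx ?uS ?orbT.
- case/andP=> /indepP I SW.
  have uW : forall u, u \in S -> (u \in W) && (u != v) && ~~ tc_adj v u.
    move=> u uS; have := subsetP SW u uS; rewrite !inE negb_or.
    by case/andP=> /andP[-> ->] ->.
  have vS : v \notin S by apply/negP => vS; have := uW v vS; rewrite eqxx andbF.
  rewrite vS andbT; apply/andP; split.
  + apply/indepP => i j; rewrite !inE => /orP[/eqP->|iS] /orP[/eqP->|jS].
    * by rewrite tc_adj_irr.
    * by case/andP: (uW j jS).
    * by rewrite tc_adj_sym; case/andP: (uW i iS).
    * exact: I.
  + apply/subsetP => u; rewrite !inE => /orP[/eqP->//|uS].
    by case/andP: (uW u uS) => /andP[].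
Qed.

Lemma cone_PW (W : {set 'I_n}) (u : 'I_n) : u \in W -> (forall w, w \in W -> ~~ tc_adj u w) ->
  Plk (PW W) u = Pdel (PW W) u.
Proof.
move=> uW H; rewrite lk_PW // del_PW; congr PW.
apply/setP => w; rewrite !inE negb_or; case: (boolP (w \in W)) => wW; rewrite ?andbF //.
by rewrite (H w wW) !andbT.
Qed.

Definition bW K (W : {set 'I_n}) := btildeP K (PW W).

Lemma bW_dec K (W : {set 'I_n}) (v : 'I_n) : v \in W -> (bW K W <= bW K (W :\ v) + bW K (W :\: NB v))%N.
Proof.
move=> vW; rewrite /bW -del_PW -lk_PW //; apply: btilde_dec; exact: dcl_PW.
Qed.

Lemma bW_cone K (W : {set 'I_n}) (u : 'I_n) : u \in W -> (forall w, w \in W -> ~~ tc_adj u w) -> bW K W = 0%N.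
Proof.
move=> uW H; apply: (@btilde_cone K n (PW W) u); first exact: dcl_PW.
exact: cone_PW.
Qed.

Lemma bW_empty K : bW K set0 = 1%N.
Proof.
apply: btilde_empty; first exact: dcl_PW.
  by rewrite /PW sub0set andbT; apply/indepP => i j; rewrite inE.
by move=> S /andP[_]; rewrite subset0 => /eqP.
Qed.

End TC.

Fixpoint g (m : nat) : nat :=
  match m with
  | 0 => 1 | 1 => 0 | 2 => 1 | 3 => 2
  | k1.+4 => match k1 with 0 => 2 | k.+1 => (g k1 + g k)%N end
  end.

Section Seg.
Variable (K : fieldType) (n : nat).

Definition seg (a m : nat) : {set 'I_n} := [set i : 'I_n | (a <= i < a + m)%N].

Ltac setsolve h1 h2 := apply/setP => i; rewrite !inE ?tc_adjE -?val_eqE /=; have := ltn_ord i; clear -h1 h2; lia.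
Ltac conesolve h1 h2 := move=> w; rewrite !inE ?tc_adjE -?val_eqE /=; have := ltn_ord w; clear -h1 h2; lia.

Lemma seg_bound m : forall a, (a + m <= n)%N -> (m + 2 <= n)%N -> (bW K (seg a m) <= g m)%N.
Proof.
elim/ltn_ind: m => m IH a h1 h2.
case: m IH h1 h2 => [|[|[|[|[|k]]]]] IH h1 h2.
- have -> : seg a 0 = set0 by setsolve h1 h2.
  by rewrite bW_empty.
- have ha : (a < n)%N by lia.
  rewrite (@bW_cone _ _ _ (Ordinal ha)) //.
    by rewrite !inE -?val_eqE /=; clear -h1 h2; lia.
  conesolve h1 h2.
- have ha : (a < n)%N by lia.
  apply: leq_trans (bW_dec K (v := Ordinal ha) _) _; first by rewrite !inE -?val_eqE /=; clear -h1 h2; lia.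
  have -> : seg a 2 :\ Ordinal ha = seg a.+1 1 by setsolve h1 h2.
  have -> : seg a 2 :\: NB (Ordinal ha) = set0 by setsolve h1 h2.
  rewrite bW_empty; have := IH 1%N isT a.+1; simpl g; lia.
- have ha : (a < n)%N by lia.
  apply: leq_trans (bW_dec K (v := Ordinal ha) _) _; first by rewrite !inE -?val_eqE /=; clear -h1 h2; lia.
  have -> : seg a 3 :\ Ordinal ha = seg a.+1 2 by setsolve h1 h2.
  have -> : seg a 3 :\: NB (Ordinal ha) = set0 by setsolve h1 h2.
  rewrite bW_empty; have := IH 2%N isT a.+1; simpl g; lia.
- have ha : (a < n)%N by lia.
  apply: leq_trans (bW_dec K (v := Ordinal ha) _) _; first by rewrite !inE -?val_eqE /=; clear -h1 h2; lia.
  have -> : seg a 4 :\ Ordinal ha = seg a.+1 3 by setsolve h1 h2.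
  have -> : seg a 4 :\: NB (Ordinal ha) = seg (a + 3) 1 by setsolve h1 h2.
  have := IH 3%N isT a.+1; have := IH 1%N isT (a + 3)%N; simpl g; lia.
- have h3 : (a + 3 < n)%N by lia.
  have h2' : (a + 2 < n)%N by lia.
  have ha : (a < n)%N by lia.
  have ha1 : (a.+1 < n)%N by lia.
  apply: leq_trans (bW_dec K (v := Ordinal h3) _) _; first by rewrite !inE -?val_eqE /=; clear -h1 h2; lia.
  rewrite (@bW_cone _ _ (seg a k.+4.+1 :\: NB (Ordinal h3)) (Ordinal ha)); first last.
  + conesolve h1 h2.
  + by rewrite !inE ?tc_adjE -?val_eqE /=; clear -h1 h2; lia.
  rewrite addn0.
  apply: leq_trans (bW_dec K (v := Ordinal h2') _) _; first by rewrite !inE -?val_eqE /=; clear -h1 h2; lia.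
  have -> : (seg a k.+4.+1 :\ Ordinal h3) :\: NB (Ordinal h2') = seg (a + 5) k by setsolve h1 h2.
  apply: leq_trans (leq_add (bW_dec K (v := Ordinal ha) _) (leqnn _)) _; first by rewrite !inE -?val_eqE /=; clear -h1 h2; lia.
  rewrite (@bW_cone _ _ (seg a k.+4.+1 :\ Ordinal h3 :\ Ordinal h2' :\ Ordinal ha) (Ordinal ha1)); first last.
  + conesolve h1 h2.
  + by rewrite !inE -?val_eqE /=; clear -h1 h2; lia.
  rewrite add0n.
  have -> : (seg a k.+4.+1 :\ Ordinal h3 :\ Ordinal h2') :\: NB (Ordinal ha) = seg (a + 4) k.+1 by setsolve h1 h2.
  have := IH k.+1 ltac:(lia) (a + 4)%N; have := IH k ltac:(lia) (a + 5)%N.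
  simpl g; lia.
Qed.

End Seg.

From Stdlib Require Import Reals Lra Lia.
Module MR.
Local Open Scope R_scope.

Definition xr (m : nat) : R := Rpower 2 (INR m / 4).

Lemma xr_4 m : xr (m + 4) = 2 * xr m.
Proof.
rewrite /xr plus_INR.
replace ((INR m + INR 4) / 4) with (INR m / 4 + 1) by (simpl; field).
rewrite Rpower_plus Rpower_1; lra.
Qed.

Lemma xr_mono m k : (m <= k)%coq_nat -> xr m <= xr k.
Proof.
move=> h; rewrite /xr; apply: Rle_Rpower; first lra.
have := le_INR _ _ h; lra.
Qed.

Lemma xr_pos m : 0 < xr m.
Proof. rewrite /xr /Rpower; apply: exp_pos. Qed.

Lemma xr3 : 3 / 2 <= xr 3.
Proof.
have h : Rpower (xr 3) (INR 4) = 8.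
  rewrite /xr Rpower_mult.
  replace (INR 3 / 4 * INR 4) with (INR 3) by (simpl; field).
  rewrite Rpower_pow; simpl; lra.
rewrite Rpower_pow in h; last exact: xr_pos.
have p := xr_pos 3.
simpl in h.
destruct (Rle_or_lt (3/2) (xr 3)) as [|hl]; first done.
exfalso.
have h2 : xr 3 * xr 3 < 9/4 by nra.
have h3 : xr 3 * xr 3 * (xr 3 * xr 3) < 81/16 by nra.
nra.
Qed.

Lemma xr0 : xr 0 = 1.
Proof. rewrite /xr; simpl; replace (0/4) with 0 by field; apply: Rpower_O; lra. Qed.

Lemma g_bound (m : nat) : leq 4 m -> INR (g m) <= xr m.
Proof.
elim/ltn_ind: m => m IH h4.
have x4 : xr 4 = 2 by rewrite -[4%nat]/(0 + 4)%nat xr_4 xr0; lra.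
case: m IH h4 => [|[|[|[|[|[|[|[|[|k]]]]]]]]] IH h4 //.
- rewrite x4 /=; lra.
- have := @xr_mono 4 5 ltac:(lia); rewrite x4 /=; lra.
- have := @xr_mono 4 6 ltac:(lia); rewrite x4 /=; lra.
- rewrite -[7%nat]/(3 + 4)%nat xr_4; have := xr3; simpl; lra.
- rewrite -[8%nat]/(4 + 4)%nat xr_4 x4; simpl; lra.
- have -> : g k.+4.+1.+4 = addn (g k.+1.+4) (g k.+4) by [].
  rewrite plus_INR.
  have e : xr k.+4.+1.+4 = 2 * xr k.+1.+4 by rewrite -xr_4; congr xr; lia.
  have := IH k.+1.+4 ltac:(lia) ltac:(lia).
  have := IH k.+4 ltac:(lia) ltac:(lia).
  have := @xr_mono k.+4 k.+1.+4 ltac:(lia).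
  rewrite e; lra.
Qed.

End MR.
Import MR.

Lemma btilde_bound K n : (9 <= n)%N -> (btilde K n <= g (n - 2) + 2 * g (n - 5))%N.
Proof.
move=> h9.
have -> : btilde K n = bW K [set: 'I_n].
  rewrite /bW btilde_P; congr btildeP; apply: functional_extensionality => S.
  by rewrite /PW subsetT andbT.
have h0 : (0 < n)%N by lia.
have h1' : (1 < n)%N by lia.
have h1 : (3 + (n - 5) <= n)%N by lia.
have h2 : (n - 5 + 2 <= n)%N by lia.
apply: leq_trans (bW_dec K (v := Ordinal h0) _) _; first by rewrite inE.
have -> : [set: 'I_n] :\: NB (Ordinal h0) = seg n 3 (n - 5).
  apply/setP => i; rewrite !inE ?tc_adjE -?val_eqE /=; have := ltn_ord i; clear -h1 h2; lia.
apply: leq_trans (leq_add (bW_dec K (v := Ordinal h1') _) (leqnn _)) _.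
  by rewrite !inE -?val_eqE /=.
have -> : [set: 'I_n] :\ Ordinal h0 :\ Ordinal h1' = seg n 2 (n - 2).
  apply/setP => i; rewrite !inE ?tc_adjE -?val_eqE /=; have := ltn_ord i; clear -h1 h2; lia.
have -> : [set: 'I_n] :\ Ordinal h0 :\: NB (Ordinal h1') = seg n 4 (n - 5).
  apply/setP => i; rewrite !inE ?tc_adjE -?val_eqE /=; have := ltn_ord i; clear -h1 h2; lia.
have a1 : (2 + (n - 2) <= n)%N by clear -h9; lia.
have a2 : (n - 2 + 2 <= n)%N by clear -h9; lia.
have a3 : (4 + (n - 5) <= n)%N by clear -h9; lia.
have s1 := @seg_bound K n (n - 2) 2 a1 a2.
have s2 := @seg_bound K n (n - 5) 3 h1 h2.
have s3 := @seg_bound K n (n - 5) 4 a3 h2.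
move: s1 s2 s3; clear; lia.
Qed.

Theorem lemmaA21 (K : fieldType) (n : nat) :
  (9 <= n)%N ->
  (INR (btilde K n) <=
   Rpower 2 (INR n / 4) * (Rpower 2 (- (1 / 2)) + Rpower 2 (- (1 / 4))))%R.
Proof.
move=> h9.
have hb := @btilde_bound K n h9.
apply: (Rle_trans _ (INR (g (n - 2) + 2 * g (n - 5)))); first exact/le_INR/leP.
rewrite plus_INR mult_INR.
have a1 : leq 4 (n - 2) by clear -h9; lia.
have a2 : leq 4 (n - 5) by clear -h9; lia.
have ga := @g_bound (n - 2) a1.
have gb := @g_bound (n - 5) a2.
have e1 : xr (n - 2) = (Rpower 2 (INR n / 4) * Rpower 2 (- (1 / 2)))%R.
  rewrite /xr -Rpower_plus minus_INR; last by apply/leP; lia.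
  congr Rpower; simpl; field.
have e2 : (2 * xr (n - 5) = Rpower 2 (INR n / 4) * Rpower 2 (- (1 / 4)))%R.
  rewrite /xr -Rpower_plus minus_INR; last by apply/leP; lia.
  rewrite -{1}(Rpower_1 2); last lra.
  rewrite -Rpower_plus; congr Rpower; simpl; field.
rewrite (_ : INR 2 = 2%R); last by simpl; lra.
rewrite Rmult_plus_distr_l -e1 -e2.
lra.
Qed.
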